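(* Let $(V_1,\dots,V_n)$ be an $n$-tuple of doubly non-commuting isometries on $H$ and let $T\in B(H)$ commute with the projections $V_i^kV_i^{*k}$ for all $i=1,\dots,n$ and all $k\ge1$ (equivalently, $V_i^k(H)$ reduces $T$ for all such $i,k$). Then for every (possibly empty) $A=\{i_1,\dots,i_l\}\subseteq\{1,\dots,n\}$, every subspace $V_{i_1}^{k_{i_1}}\cdots V_{i_l}^{k_{i_l}}(W_A)$ ($k_{i_1},\dots,k_{i_l}\ge0$) reduces $T$; in particular $W_A$ reduces $T$. Consequently $H_A$ reduces $T$.
   Context: Fix $n\ge1$ and $z_{ij}\in\mathbb T$ ($i\ne j$) with $z_{ji}=\overline{z_{ij}}$; $(V_1,\dots,V_n)$ is doubly non-commuting if the $V_i$ are isometries with $V_i^*V_j=\overline{z_{ij}}V_jV_i^*$ for $i\ne j$. For an isometry $S$: $H^{\mathrm{iso}}(S)=\bigoplus_{k\ge0}S^k(\ker S^* )$, $H^{\mathrm{uni}}(S)=\bigcap_{k\ge0}S^k(H)$. With $A^c$ the complement, $H_A=\bigcap_{i\in A}H^{\mathrm{iso}}(V_i)\cap\bigcap_{i\in A^c}H^{\mathrm{uni}}(V_i)$ (empty intersection $=H$) and $W_A=\bigcap_{(m_j)\in\mathbb N_0^{A^c}}\big(\prod_{j\in A^c}V_j^{m_j}\big)\big(\bigcap_{i\in A}\ker V_i^*\big)$ (empty intersection of kernels $=H$, empty product $=$ identity). It is known that $H_A=\bigoplus_{k}V_{i_1}^{k_{i_1}}\cdots V_{i_l}^{k_{i_l}}(W_A)$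 orthogonally. *)

(* Defs.v *)
From HB Require Import structures.
From mathcomp Require Import all_boot all_order all_algebra.
From mathcomp Require Import reals.
From mathcomp Require Import complex.
Set Implicit Arguments. Unset Strict Implicit. Unset Printing Implicit Defensive.
Import Order.TTheory GRing.Theory Num.Theory.
Local Open Scope ring_scope.

Section Hilbert.
Variable R : realType.
Local Notation C := (R[i]).
Variable H : lmodType C.
Variable ip : H -> H -> C.   (* inner product, linear in the first variable *)

Definition is_inner_product : Prop :=
  [/\ forall (a : C) x y z, ip (a *: x + y) z = a * ip x z + ip y z,
      forall x y, ip y x = (ip x y)^*,
      forall x, 0 <= ip x x
    & forall x, ip x x = 0 -> x = 0].

Definition dist2 (x y : H) : C := ip (x - y) (x - y).

Definition cauchy_seq (u : nat -> H) : Prop :=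
  forall e : C, 0 < e -> exists N, forall m k, (N <= m)%N -> (N <= k)%N ->
    dist2 (u m) (u k) < e.

Definition converges_to (u : nat -> H) (x : H) : Prop :=
  forall e : C, 0 < e -> exists N, forall m, (N <= m)%N -> dist2 (u m) x < e.

Definition is_hilbert : Prop :=
  is_inner_product /\ forall u, cauchy_seq u -> exists x, converges_to u x.

Definition bounded_op (T : H -> H) : Prop :=
  linear T /\ exists M : C, forall x, ip (T x) (T x) <= M * ip x x.

Definition is_adjoint (T Ts : H -> H) : Prop :=
  forall x y, ip (T x) y = ip x (Ts y).

Definition isometry (V : H -> H) : Prop :=
  bounded_op V /\ forall x y, ip (V x) (V y) = ip x y.

Definition himage (f : H -> H) (M : H -> Prop) : H -> Prop :=
  fun y => exists x, M x /\ y = f x.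
Definition hkernel (f : H -> H) : H -> Prop := fun x => f x = 0.
Definition hspan (S : H -> Prop) : H -> Prop :=
  fun y => exists (m : nat) (a : 'I_m -> C) (v : 'I_m -> H),
    (forall j, S (v j)) /\ y = \sum_(j < m) a j *: v j.
Definition hclosure (M : H -> Prop) : H -> Prop :=
  fun x => forall e : C, 0 < e -> exists y, M y /\ dist2 x y < e.

(* H^iso(S) = closed (orthogonal) direct sum of the S^k(ker S^* ) *)
Definition Hiso (S Ss : H -> H) : H -> Prop :=
  hclosure (hspan (fun y => exists k : nat, himage (iter k S) (hkernel Ss) y)).
Definition Huni (S : H -> H) : H -> Prop :=
  fun x => forall k : nat, himage (iter k S) (fun _ => True) x.

Definition reduces (T Ts : H -> H) (M : H -> Prop) : Prop :=
  (forall x, M x -> M (T x)) /\ (forall x, M x -> M (Ts x)).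

Variable n : nat.
Variables (V Vs : 'I_n -> H -> H).

(* product of V_j^{k_j} over j in B (in increasing order of j) *)
Definition Vprod (B : {set 'I_n}) (k : 'I_n -> nat) : H -> H :=
  foldr (fun j f => iter (k j) (V j) \o f) id (enum B).

Definition HA (A : {set 'I_n}) : H -> Prop :=
  fun x => (forall i, i \in A -> Hiso (V i) (Vs i) x) /\
           (forall i, i \notin A -> Huni (V i) x).

Definition WA (A : {set 'I_n}) : H -> Prop :=
  fun x => forall m : 'I_n -> nat,
    himage (Vprod (~: A) m) (fun y => forall i, i \in A -> Vs i y = 0) x.

End Hilbert.

Definition doubly_noncommuting (R : realType) (H : lmodType R[i]) (ip : H -> H -> R[i])
  (n : nat) (z : 'I_n -> 'I_n -> R[i]) (V Vs : 'I_n -> H -> H) : Prop :=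
  [/\ forall i j, i != j -> `|z i j| = 1,
      forall i j, i != j -> z j i = (z i j)^*,
      forall i, isometry ip (V i),
      forall i, is_adjoint ip (V i) (Vs i)
    & forall i j, i != j -> forall x, Vs i (V j x) = (z i j)^* *: V j (Vs i x)].

(* Main.v *)
Require Import Defs.
From HB Require Import structures.
From mathcomp Require Import all_boot all_order all_algebra.
From mathcomp Require Import reals complex ring.
Import Order.TTheory GRing.Theory Num.Theory.
Local Open Scope ring_scope.
Set Implicit Arguments. Unset Strict Implicit.

Section Basic.
Variable R : realType.
Local Notation C := (R[i]).
Variable H : lmodType C.
Variable ip : H -> H -> C.
Hypothesis ipi : is_inner_product ip.

Definition lin (f : H -> H) := forall (a : C) u v, f (a *: u + v) = a *: f u + f v.

Lemma lin_of (f : H -> H) : linear f -> lin f.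
Proof. by move=> lf a u v; rewrite lf. Qed.

Section Lin.
Variable f : H -> H.
Hypothesis lf : lin f.
Lemma lin0 : f 0 = 0.
Proof. by have := lf (-1) 0 0; rewrite scaler0 addr0 scaleN1r addNr. Qed.
Lemma linD u v : f (u + v) = f u + f v.
Proof. by have := lf 1 u v; rewrite !scale1r. Qed.
Lemma linZ a u : f (a *: u) = a *: f u.
Proof. by have := lf a u 0; rewrite !addr0 lin0 addr0. Qed.
Lemma linN u : f (- u) = - f u.
Proof. by rewrite -scaleN1r linZ scaleN1r. Qed.
Lemma linB u v : f (u - v) = f u - f v.
Proof. by rewrite linD linN. Qed.
Lemma lin_sum m (a : 'I_m -> C) (v : 'I_m -> H) :
  f (\sum_(j < m) a j *: v j) = \sum_(j < m) a j *: f (v j).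
Proof.
rewrite (big_morph f linD lin0); apply: eq_bigr => j _; exact: linZ.
Qed.
End Lin.

Lemma lin_iter f k : lin f -> lin (iter k f).
Proof. move=> lf; elim: k => [|k IH] a u v //=. by rewrite IH lf. Qed.

Lemma ipD x y w : ip (x + y) w = ip x w + ip y w.
Proof. case: ipi => h _ _ _. by have := h 1 x y w; rewrite scale1r mul1r. Qed.
Lemma ip0l w : ip 0 w = 0.
Proof.
have h := ipD 0 0 w; rewrite addr0 in h.
by apply: (addrI (ip 0 w)); rewrite addr0 -h.
Qed.
Lemma ipZ a x w : ip (a *: x) w = a * ip x w.
Proof. case: ipi => h _ _ _. by have := h a x 0 w; rewrite !addr0 ip0l addr0. Qed.
Lemma ipN x w : ip (- x) w = - ip x w.
Proof. by rewrite -scaleN1r ipZ mulN1r. Qed.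
Lemma ipB x y w : ip (x - y) w = ip x w - ip y w.
Proof. by rewrite ipD ipN. Qed.
Lemma ipC x y : ip y x = (ip x y)^*.
Proof. by case: ipi => _ h _ _; rewrite h. Qed.
Lemma ipDr x y w : ip x (y + w) = ip x y + ip x w.
Proof. by rewrite ipC ipD [ip x y]ipC [ip x w]ipC rmorphD. Qed.
Lemma ipZr a x y : ip x (a *: y) = a^* * ip x y.
Proof. by rewrite ipC ipZ [ip x y]ipC rmorphM. Qed.
Lemma ipNr x y : ip x (- y) = - ip x y.
Proof. by rewrite ipC ipN [ip x y]ipC rmorphN. Qed.
Lemma ipBr x y w : ip x (y - w) = ip x y - ip x w.
Proof. by rewrite ipDr ipNr. Qed.
Lemma ipge0 x : 0 <= ip x x.
Proof. by case: ipi. Qed.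
Lemma ip_eq0 x : ip x x = 0 -> x = 0.
Proof. by case: ipi => _ _ _; apply. Qed.
Lemma ip_real x : (ip x x)^* = ip x x.
Proof. exact: geC0_conj (ipge0 x). Qed.

Lemma ext_r x x' : (forall y, ip x y = ip x' y) -> x = x'.
Proof.
move=> h; apply/eqP; rewrite -subr_eq0; apply/eqP; apply: ip_eq0.
by rewrite ipB h subrr.
Qed.
Lemma ext_l x x' : (forall y, ip y x = ip y x') -> x = x'.
Proof. move=> h; apply: ext_r => y; by rewrite ipC h -ipC. Qed.

Lemma adj_lin A As : is_adjoint ip A As -> lin As.
Proof.
move=> hA a u v; apply: ext_l => y.
by rewrite -hA ipDr ipZr !hA -ipZr -ipDr.
Qed.
Lemma adj_sym A As : is_adjoint ip A As -> forall x y, ip (As x) y = ip x (A y).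
Proof. move=> hA x y; by rewrite ipC -hA -ipC. Qed.

Definition isopair (W Ws : H -> H) :=
  [/\ lin W, is_adjoint ip W Ws & forall x y, ip (W x) (W y) = ip x y].

Section Iso.
Variables W Ws : H -> H.
Hypothesis hW : isopair W Ws.
Lemma WsW x : Ws (W x) = x.
Proof.
case: hW => _ aW iW; apply: ext_l => y. by rewrite -aW iW.
Qed.
Lemma W_inj x y : W x = W y -> x = y.
Proof. by move=> e; rewrite -(WsW x) e WsW. Qed.
Lemma Ws_lin : lin Ws.
Proof. case: hW => _ aW _; exact: adj_lin aW. Qed.
Lemma P_sa x y : ip (W (Ws x)) y = ip x (W (Ws y)).
Proof. case: hW => _ aW _. by rewrite aW (adj_sym aW). Qed.
Lemma pyth w : ip (Ws w) (Ws w) = ip w w -> W (Ws w) = w.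
Proof.
case: hW => lW aW iW e.
apply/eqP; rewrite eq_sym -subr_eq0; apply/eqP; apply: ip_eq0.
rewrite ipB !ipBr iW aW.
have -> : ip w (W (Ws w)) = ip (Ws w) (Ws w) by rewrite ipC aW ip_real.
by rewrite e !subrr.
Qed.
End Iso.

Lemma isopair_iter W Ws k : isopair W Ws -> isopair (iter k W) (iter k Ws).
Proof.
case=> lW aW iW; split.
- exact: lin_iter.
- elim: k => [|k IH] x y //=. by rewrite aW IH -iterSr.
- elim: k => [|k IH] x y //=. by rewrite iW IH.
Qed.

Lemma adj_comm G Gs (Q : H -> H) : is_adjoint ip G Gs ->
  (forall x y, ip (Q x) y = ip x (Q y)) -> (forall x, G (Q x) = Q (G x)) ->
  forall x, Gs (Q x) = Q (Gs x).
Proof. move=> aG sQ cG x; apply: ext_l => y. by rewrite -aG -sQ -cG aG sQ. Qed.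

Definition bnd (G : H -> H) := exists M : C, 0 < M /\ forall x, ip (G x) (G x) <= M * ip x x.

Lemma pos_bound G : (exists M : C, forall x, ip (G x) (G x) <= M * ip x x) -> bnd G.
Proof.
case=> M hM; exists (`|M| + 1); split.
  exact: ltr_wpDl (normr_ge0 M) ltr01.
move=> x; have h := hM x.
have h0 : 0 <= M * ip x x := le_trans (ipge0 _) h.
apply: (le_trans h); rewrite -(ger0_norm h0) normrM (ger0_norm (ipge0 x)).
by apply: ler_wpM2r; [exact: ipge0 | rewrite lerDl ler01].
Qed.

Lemma adj_bound G Gs : is_adjoint ip G Gs -> bnd G -> bnd Gs.
Proof.
move=> aG [M [M0 hM]]; exists M; split=> // y.
set u := Gs y.
have h0 := ipge0 (G u - M *: y).
have e1 : ip (G u) y = ip u u by rewrite aG.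
have e2 : ip y (G u) = ip u u by rewrite ipC e1 ip_real.
have eM : M^* = M by apply: geC0_conj; exact: ltW.
have E : ip (G u - M *: y) (G u - M *: y) =
   ip (G u) (G u) - M * ip u u - M * ip u u + M * (M * ip y y).
  rewrite ipB !ipBr !ipZ !ipZr e1 e2 eM. ring.
have : 0 <= M * (M * ip y y - ip u u).
  apply: (le_trans h0); rewrite E.
  have -> : M * (M * ip y y - ip u u) =
     M * ip u u - M * ip u u - M * ip u u + M * (M * ip y y) by ring.
  by rewrite !lerD2r (hM u).
by rewrite pmulr_rge0 // subr_ge0.
Qed.

Lemma closure_inv G (S S' : H -> Prop) : lin G -> bnd G ->
  (forall x, S x -> S' (G x)) -> forall x, hclosure ip S x -> hclosure ip S' (G x).
Proof.
move=> lG [M [M0 hM]] hS x hx e e0.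
case: (hx (e / M) (divr_gt0 e0 M0)) => y [Sy dy].
exists (G y); split; first exact: hS.
rewrite /dist2 -linB //; apply: (le_lt_trans (hM _)).
rewrite -(ltr_pM2l M0) in dy.
have eE : M * (e / M) = e by rewrite mulrC divfK ?(lt0r_neq0 M0).
by rewrite eE in dy.
Qed.

Lemma span_inv G (S S' : H -> Prop) : lin G ->
  (forall x, S x -> S' (G x)) -> forall x, hspan S x -> hspan S' (G x).
Proof.
move=> lG hS x [m [a [v [Sv ->]]]].
exists m, a, (fun j => G (v j)); split; first by move=> j; apply: hS.
exact: lin_sum.
Qed.


Lemma comm_iter1 (f g : H -> H) c : lin g -> (forall x, f (g x) = c *: g (f x)) ->
  forall b x, f (iter b g x) = c ^+ b *: iter b g (f x).
Proof.
move=> lg h; elim=> [|b IH] x /=; first by rewrite expr0 scale1r.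
by rewrite h IH linZ // scalerA exprS.
Qed.

Lemma comm_iter2 (f g : H -> H) c : lin g -> (forall x, g (f x) = c *: f (g x)) ->
  forall b x, iter b g (f x) = c ^+ b *: f (iter b g x).
Proof.
move=> lg h; elim=> [|b IH] x /=; first by rewrite expr0 scale1r.
by rewrite IH linZ // h scalerA exprSr.
Qed.

Definition stab (f : H -> H) (S : H -> Prop) := forall x, S x <-> S (f x).
Definition scl (S : H -> Prop) := forall (c : C) x, S x -> S (c *: x).

Lemma stabT f : stab f (fun _ => True).
Proof. by move=> x; split. Qed.
Lemma sclT : scl (fun _ => True).
Proof. by []. Qed.

Lemma stab_iter f S : stab f S -> forall k x, S x <-> S (iter k f x).
Proof.
move=> sf; elim=> [|k IH] x //=.
split=> h.
- apply: (sf _).1; exact: (IH _).1.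
- apply: (IH _).2; exact: (sf _).2.
Qed.

Lemma img_meet f a (X D : H -> Prop) : stab f X -> forall x,
  himage (iter a f) (fun y => X y /\ D y) x <-> X x /\ himage (iter a f) D x.
Proof.
move=> sX x; split.
- case=> y [[Xy Dy] ->]; split; [exact: (stab_iter sX a y).1 | by exists y].
- case=> Xx [y [Dy ex]]; exists y; split=> //; split=> //.
  apply: (stab_iter sX a y).2; by rewrite -ex.
Qed.

Lemma himage_ext f (P Q : H -> Prop) : (forall y, P y <-> Q y) ->
  forall x, himage f P x <-> himage f Q x.
Proof.
move=> e x; split; case=> y [Py ->]; exists y; split=> //; by apply/e.
Qed.

Variable n : nat.
Variable z : 'I_n -> 'I_n -> C.
Variables V Vs : 'I_n -> H -> H.
Hypothesis dnc : doubly_noncommuting ip z V Vs.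

Lemma Vpair i : isopair (V i) (Vs i).
Proof.
case: dnc => _ _ iso adj _. case: (iso i) => [[lV _] iV].
split=> //; exact: lin_of.
Qed.
Lemma Vk k i : isopair (iter k (V i)) (iter k (Vs i)).
Proof. exact: isopair_iter (Vpair i). Qed.
Lemma linV i : lin (V i).
Proof. by case: (Vpair i). Qed.
Lemma linVs i : lin (Vs i).
Proof. exact: Ws_lin (Vpair i). Qed.
Lemma linVk k i : lin (iter k (V i)).
Proof. exact: lin_iter (linV i). Qed.
Lemma zn i j : i != j -> (z i j)^* * z i j = 1.
Proof.
case: dnc => nz _ _ _ _ ij. have := normCK (z i j).
rewrite nz // expr1n => e. by rewrite mulrC -e.
Qed.
Lemma rel i j : i != j -> forall x, Vs i (V j x) = (z i j)^* *: V j (Vs i x).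
Proof. by case: dnc => _ _ _ _; apply. Qed.

Lemma comm1 i j : i != j -> forall x, V j (V i x) = (z i j)^* *: V i (V j x).
Proof.
move=> ij x.
have e1 : Vs i (V j (V i x)) = (z i j)^* *: V j x by rewrite rel // (WsW (Vpair i)).
have iso : forall a b k, ip (V k a) (V k b) = ip a b by move=> a b k; case: (Vpair k).
have pw : V i (Vs i (V j (V i x))) = V j (V i x).
  apply: (pyth (Vpair i)).
  by rewrite e1 ipZ ipZr conjCK !iso mulrA zn // mul1r.
by rewrite -pw e1 linZ //; exact: linV.
Qed.

Lemma S1 i j : i != j -> stab (V j) (fun y => Vs i y = 0).
Proof.
move=> ij x; rewrite /= (rel ij); split.
  by move=> ->; rewrite (lin0 (linV j)) scaler0.
move=> h. have : V j (Vs i x) = V j 0.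
  rewrite (lin0 (linV j)) -[V j (Vs i x)]scale1r -(zn ij) mulrC -scalerA h.
  by rewrite scaler0.
by move/(W_inj (Vpair j)).
Qed.

Lemma img_stable i j b (D : H -> Prop) : i != j -> stab (V j) D -> scl D ->
  stab (V j) (himage (iter b (V i)) D).
Proof.
move=> ij sD cD x; split.
- case=> y [Dy ->]. exists ((z i j)^* ^+ b *: V j y); split.
    apply: cD; exact: (sD _).1.
  rewrite (linZ (linVk b i)).
  exact: comm_iter1 (linV i) (comm1 ij) b y.
- case=> u [Du e].
  have ji : j != i by rewrite eq_sym.
  set u' := (z i j)^* ^+ b *: iter b (Vs i) x.
  have eu : u = V j u'.
    rewrite (linZ (linV j)) -(comm_iter2 (linVs i) (rel ij)) e.
    by rewrite (WsW (Vk b i)).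
  have Du' : D u' by apply/(sD u').2; rewrite -eu.
  have : V j x = V j ((z j i)^* ^+ b *: iter b (V i) u').
    rewrite e eu [RHS](linZ (linV j)).
    exact: comm_iter2 (linV i) (comm1 ji) b u'.
  move/(W_inj (Vpair j)) => ->.
  exists ((z j i)^* ^+ b *: u'); split; first exact: cD.
  by rewrite [RHS](linZ (linVk b i)).
Qed.

Definition F (k : 'I_n -> nat) (s : seq 'I_n) :=
  foldr (fun j f => iter (k j) (V j) \o f) id s.

Lemma gen (s : seq 'I_n) (k : 'I_n -> nat) (D : 'I_n -> H -> Prop) : uniq s ->
  (forall j j', j \in s -> j' \in s -> j != j' -> stab (V j') (D j)) ->
  (forall j, j \in s -> scl (D j)) ->
  forall (S : H -> Prop), (forall j, j \in s -> stab (V j) S) ->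
  forall x, himage (F k s) (fun y => S y /\ forall j, j \in s -> D j y) x
    <-> S x /\ forall j, j \in s -> himage (iter (k j) (V j)) (D j) x.
Proof.
elim: s => [|j s IH] us sD cD S sS x.
  split; first by case=> y [[Sy _] ->].
  by case=> Sx _; exists x; split.
case/andP: us => js us.
have inS : forall j', j' \in s -> j' \in j :: s by move=> j' h; rewrite in_cons h orbT.
have jh : j \in j :: s by rewrite in_cons eqxx.
have sD' : forall j1 j', j1 \in s -> j' \in s -> j1 != j' -> stab (V j') (D j1).
  by move=> j1 j' h1 h2; apply: sD; apply: inS.
have cD' : forall j1, j1 \in s -> scl (D j1) by move=> j1 h; apply: cD; apply: inS.
have jj : forall j', j' \in s -> j' != j.
  by move=> j' h; apply/eqP=> e; rewrite -e h in js.
have sS' : forall j', j' \in s -> stab (V j') (fun y => S y /\ D j y).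
  move=> j' h y; split.
  - case=> a b; split; first exact: (sS j' (inS _ h) y).1.
    by apply: (sD j j' jh (inS _ h) _ y).1; rewrite // eq_sym jj.
  - case=> a b; split; first exact: (sS j' (inS _ h) y).2.
    by apply: (sD j j' jh (inS _ h) _ y).2; rewrite // eq_sym jj.
have stj : forall j0, j0 \in s -> stab (V j) (himage (iter (k j0) (V j0)) (D j0)).
  move=> j0 h; apply: img_stable; first exact: jj.
    by apply: sD; [apply: inS | | exact: jj].
  exact: cD' h.
split.
- case=> y [[Sy Dy] ->]. rewrite /F /=. set x' := foldr _ id s y.
  have := (IH us sD' cD' (fun y => S y /\ D j y) sS' x').1.
  case.
    exists y; split=> //; split; [split=> //; exact: Dy | move=> j0 h; apply: Dy; exact: inS].
  case=> Sx' Dx' Q; split; first exact: (stab_iter (sS j jh) (k j) x').1.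
  move=> j0; rewrite in_cons => /orP [/eqP -> | h]; first by exists x'.
  exact: (stab_iter (stj j0 h) (k j) x').1 (Q j0 h).
- case=> Sx Q. case: (Q j jh) => x' [Dx' ex].
  have Sx' : S x' by apply: (stab_iter (sS j jh) (k j) x').2; rewrite -ex.
  have Qx' : forall j0, j0 \in s -> himage (iter (k j0) (V j0)) (D j0) x'.
    move=> j0 h; apply: (stab_iter (stj j0 h) (k j) x').2; rewrite -ex.
    exact: Q j0 (inS _ h).
  case: ((IH us sD' cD' (fun y => S y /\ D j y) sS' x').2 (conj (conj Sx' Dx') Qx')).
  move=> y [[[Sy Djy] Dsy] ey].
  exists y; split; last by rewrite ex ey.
  split=> // j0; rewrite in_cons => /orP [/eqP -> //| h]; exact: Dsy.
Qed.

Definition KA (A : {set 'I_n}) (y : H) := forall i, i \in A -> Vs i y = 0.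
Definition UA (A : {set 'I_n}) (y : H) :=
  forall j, j \notin A -> forall a, himage (iter a (V j)) (fun _ => True) y.

Lemma stabK (A : {set 'I_n}) j : j \notin A -> stab (V j) (KA A).
Proof.
move=> jA x; split=> h i iA; have ij : i != j by apply/eqP => e; rewrite -e iA in jA.
- exact: (S1 ij x).1 (h i iA).
- exact: (S1 ij x).2 (h i iA).
Qed.

Lemma U1 (A : {set 'I_n}) x : WA V Vs A x <-> KA A x /\ UA A x.
Proof.
have key : forall m y, himage (Vprod V (~: A) m) (fun y => forall i, i \in A -> Vs i y = 0) y
   <-> KA A y /\ forall j, j \in enum (~: A) -> himage (iter (m j) (V j)) (fun _ => True) y.
  move=> m y.
  have e1 := @himage_ext (Vprod V (~: A) m) (fun y => forall i, i \in A -> Vs i y = 0)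
     (fun y => KA A y /\ forall j, j \in enum (~: A) -> True) _ y.
  apply: iff_trans (e1 _) _.
    by move=> y'; split; [move=> h; split | case].
  apply: (@gen (enum (~: A)) m (fun _ _ => True) (enum_uniq _)).
  - by move=> *; exact: stabT.
  - by move=> *; exact: sclT.
  - by move=> j; rewrite mem_enum in_setC => jA; exact: stabK.
rewrite /WA; split.
- move=> h; split; first by case: ((key (fun _ => 0%N) x).1 (h _)).
  move=> j jA a; case: ((key (fun _ => a) x).1 (h _)) => _; apply.
  by rewrite mem_enum in_setC.
- case=> Kx Ux m; apply/(key m x).2; split=> // j.
  rewrite mem_enum in_setC => jA; exact: Ux.
Qed.

Lemma U2 (A : {set 'I_n}) k x : himage (Vprod V A k) (WA V Vs A) x <->
  UA A x /\ forall i, i \in A -> himage (iter (k i) (V i)) (fun y => Vs i y = 0) x.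
Proof.
have e1 := @himage_ext (Vprod V A k) (WA V Vs A)
     (fun y => UA A y /\ forall j, j \in enum A -> Vs j y = 0) _ x.
apply: iff_trans (e1 _) _.
  move=> y; rewrite U1; split; case=> a b; split=> //.
  - by move=> j; rewrite mem_enum; apply: a.
  - by move=> j jA; apply: b; rewrite mem_enum.
have sD : forall j j', j \in enum A -> j' \in enum A -> j != j' ->
    stab (V j') (fun y => Vs j y = 0).
  by move=> j j' _ _ jj'; exact: S1.
have cD : forall j, j \in enum A -> scl (fun y => Vs j y = 0).
  move=> j _ c y h /=; by rewrite (linZ (linVs j)) h scaler0.
have sS : forall j, j \in enum A -> stab (V j) (UA A).
  move=> j; rewrite mem_enum => jA y; split=> h j' j'A a.
  + have jj : j' != j by apply/eqP=> e; rewrite e jA in j'A.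
    exact: (img_stable a jj (@stabT (V j)) sclT y).1 (h j' j'A a).
  + have jj : j' != j by apply/eqP=> e; rewrite e jA in j'A.
    exact: (img_stable a jj (@stabT (V j)) sclT y).2 (h j' j'A a).
have h := @gen (enum A) k (fun i y => Vs i y = 0) (enum_uniq _) sD cD (UA A) sS x.
split.
- by move/h => [U Q]; split=> // i iA; apply: Q; rewrite mem_enum.
- by case=> U Q; apply/h; split=> // i; rewrite mem_enum; apply: Q.
Qed.

Section Inv.
Variable G : H -> H.
Hypothesis lG : lin G.
Hypothesis cG : forall i k, (1 <= k)%N -> forall x,
  G (iter k (V i) (iter k (Vs i) x)) = iter k (V i) (iter k (Vs i) (G x)).

Lemma rangeP i b x y : x = iter b (V i) y ->
  G x = iter b (V i) (iter b (Vs i) (G x)).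
Proof.
case: b => [|b] -> //. rewrite -cG //. by rewrite (WsW (Vk b.+1 i)).
Qed.

Lemma inv_range i b x : himage (iter b (V i)) (fun _ => True) x ->
  himage (iter b (V i)) (fun _ => True) (G x).
Proof.
case=> y [_ e]. exists (iter b (Vs i) (G x)); split=> //. exact: rangeP e.
Qed.

Lemma inv_img i b x : himage (iter b (V i)) (fun y => Vs i y = 0) x ->
  himage (iter b (V i)) (fun y => Vs i y = 0) (G x).
Proof.
case=> y [Dy e]. exists (iter b (Vs i) (G x)); split; last exact: rangeP e.
have h : iter b.+1 (V i) (iter b.+1 (Vs i) (G x)) = iter b.+1 (V i) 0.
  rewrite -cG //.
  have -> : iter b.+1 (Vs i) x = 0.
    by rewrite /= e (WsW (Vk b i)) Dy.
  by rewrite !(lin0 (linVk b.+1 i)) (lin0 lG).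
by move/(W_inj (Vk b.+1 i)): h.
Qed.

Lemma inv_ker i x : Vs i x = 0 -> Vs i (G x) = 0.
Proof.
move=> h.
have [y [Dy e]] := @inv_img i 0 x (ex_intro _ x (conj h erefl)).
by rewrite /= in e; rewrite e.
Qed.

Lemma inv_WA (A : {set 'I_n}) x : WA V Vs A x -> WA V Vs A (G x).
Proof.
move=> /U1 [K U]; apply/U1; split.
- move=> i iA; exact: inv_ker (K i iA).
- move=> j jA a; exact: inv_range (U j jA a).
Qed.

Lemma inv_img2 (A : {set 'I_n}) k x : himage (Vprod V A k) (WA V Vs A) x ->
  himage (Vprod V A k) (WA V Vs A) (G x).
Proof.
move=> /U2 [U Q]; apply/U2; split.
- move=> j jA a; exact: inv_range (U j jA a).
- move=> i iA; exact: inv_img (Q i iA).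
Qed.

Lemma inv_HA (A : {set 'I_n}) x : bnd G -> HA ip V Vs A x -> HA ip V Vs A (G x).
Proof.
move=> bG [h1 h2]; split.
- move=> i iA. apply: (closure_inv lG bG _ (h1 i iA)).
  move=> y; apply: span_inv lG _ y.
  move=> w [k hk]; exists k; exact: inv_img hk.
- move=> i iA k; exact: inv_range (h2 i iA k).
Qed.
End Inv.

End Basic.

Theorem proposition3p10 (R : realType) (H : lmodType R[i]) (ip : H -> H -> R[i])
  (n : nat) (z : 'I_n -> 'I_n -> R[i]) (V Vs : 'I_n -> H -> H) (T Ts : H -> H) :
  is_hilbert ip ->
  doubly_noncommuting ip z V Vs ->
  bounded_op ip T -> is_adjoint ip T Ts ->
  (forall (i : 'I_n) (k : nat), (1 <= k)%N -> forall x,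
      T (iter k (V i) (iter k (Vs i) x)) = iter k (V i) (iter k (Vs i) (T x))) ->
  forall A : {set 'I_n},
    (forall k : 'I_n -> nat, reduces T Ts (himage (Vprod V A k) (WA V Vs A))) /\
    reduces T Ts (WA V Vs A) /\
    reduces T Ts (HA ip V Vs A).
Proof.
move=> [ipi _] dnc [lT bT0] aT cT A.
have lT' := lin_of lT.
have bT := pos_bound ipi bT0.
have lTs := adj_lin ipi aT.
have bTs := adj_bound ipi aT bT.
have cTs : forall i k, (1 <= k)%N -> forall x,
    Ts (iter k (V i) (iter k (Vs i) x)) = iter k (V i) (iter k (Vs i) (Ts x)).
  move=> i k hk x.
  apply: (adj_comm ipi (Q := fun x => iter k (V i) (iter k (Vs i) x)) aT _ _ x).
    have hh := P_sa ipi (Vk dnc k i). exact hh.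
  - exact: cT i k hk.
split; [|split].
- move=> k; split=> x.
  + apply (inv_img2 ipi dnc lT' cT).
  + apply (inv_img2 ipi dnc lTs cTs).
- split=> x.
  + apply (inv_WA ipi dnc lT' cT).
  + apply (inv_WA ipi dnc lTs cTs).
- split=> x.
  + apply (inv_HA ipi dnc lT' cT bT).
  + apply (inv_HA ipi dnc lTs cTs bTs).
Qed.
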